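(* Let $(x_1,y_1),\dots,(x_m,y_m)$ be observations with $x_i\in[N]$ and labels $y_i\in[0,M]$. For $j\in[N]$ let $\mu(j)=\frac{\sum_i[x_i\le j]y_i}{\sum_i[x_i\le j]}$, $\gamma(j)=\frac{\sum_i[x_i>j]y_i}{\sum_i[x_i>j]}$ and $L(j)=\frac1m\Big(\sum_{i=1}^m[x_i\le j](y_i-\mu(j))^2+\sum_{i=1}^m[x_i>j](y_i-\gamma(j))^2\Big)$. Then for any $j'>j$, setting $b=\sum_{i=1}^m[j<x_i\le j']$, we have $L(j')\le L(j)+\frac{5bM^2}{4m}$.
   Context: $[N]=\{1,\dots,N\}$ and $[E]$ denotes the indicator of event $E$. If one side of a split is empty, the corresponding sum is empty and contributes $0$. *)

(* Defs.v *)
From mathcomp Require Import all_boot all_order all_algebra.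
Set Implicit Arguments. Unset Strict Implicit. Unset Printing Implicit Defensive.
Import Order.TTheory GRing.Theory Num.Theory.
Local Open Scope ring_scope.

(* Indicator sums are written as
   filtered big sums; an empty sum is 0, and division by 0 is 0 in MathComp,
   so an empty side contributes 0 as required by the context. *)

Definition mu (R : realFieldType) (m : nat) (x : 'I_m -> nat) (y : 'I_m -> R)
  (j : nat) : R :=
  (\sum_(i < m | (x i <= j)%N) y i) / (\sum_(i < m | (x i <= j)%N) 1).

Definition gamma (R : realFieldType) (m : nat) (x : 'I_m -> nat) (y : 'I_m -> R)
  (j : nat) : R :=
  (\sum_(i < m | (j < x i)%N) y i) / (\sum_(i < m | (j < x i)%N) 1).

Definition L (R : realFieldType) (m : nat) (x : 'I_m -> nat) (y : 'I_m -> R)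
  (j : nat) : R :=
  m%:R^-1 * (\sum_(i < m | (x i <= j)%N) (y i - mu x y j) ^+ 2
           + \sum_(i < m | (j < x i)%N) (y i - gamma x y j) ^+ 2).

(* Main.v *)
Require Import Defs.
From mathcomp Require Import all_boot all_order all_algebra.
From mathcomp Require Import ring lra.
Import Order.TTheory GRing.Theory Num.Theory.
Local Open Scope ring_scope.

Section H.
Variables (R : realFieldType) (m : nat) (M : R) (y : 'I_m -> R).
Hypothesis hy : forall i, 0 <= y i <= M.

Lemma sum_le_M (P : pred 'I_m) :
  0 <= \sum_(i < m | P i) y i <= M * \sum_(i < m | P i) 1.
Proof.
apply/andP; split; first by apply: sumr_ge0 => i _; case/andP: (hy i).
rewrite mulr_sumr; apply: ler_sum => i _; rewrite mulr1; by case/andP: (hy i).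
Qed.

Lemma mean_eq (P : pred 'I_m) :
  \sum_(i < m | P i) y i =
  (\sum_(i < m | P i) 1) * ((\sum_(i < m | P i) y i) / (\sum_(i < m | P i) (1:R))).
Proof.
have [n0|nz] := eqVneq (\sum_(i < m | P i) (1:R)) 0.
  have /andP[h1 h2] := sum_le_M P.
  rewrite n0 mul0r; apply/eqP; rewrite eq_le h1 andbT.
  by move: h2; rewrite n0 mulr0.
by rewrite mulrC divfK.
Qed.

Lemma mean_bound (P : pred 'I_m) (hM : 0 <= M) :
  0 <= (\sum_(i < m | P i) y i) / (\sum_(i < m | P i) (1:R)) <= M.
Proof.
have /andP[h1 h2] := sum_le_M P.
have nn0 : 0 <= \sum_(i < m | P i) (1:R) by apply: sumr_ge0.
apply/andP; split; first by apply: divr_ge0.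
have [n0|nz] := eqVneq (\sum_(i < m | P i) (1:R)) 0.
  rewrite n0 invr0 mulr0.
  by [].
have np : 0 < \sum_(i < m | P i) (1:R) by rewrite lt0r nz.
by rewrite ler_pdivrMr.
Qed.

Lemma sse_min (P : pred 'I_m) (c : R) :
  \sum_(i < m | P i) (y i - (\sum_(i < m | P i) y i) / (\sum_(i < m | P i) (1:R))) ^+ 2
  <= \sum_(i < m | P i) (y i - c) ^+ 2.
Proof.
set n := \sum_(i < m | P i) (1:R).
set s := \sum_(i < m | P i) y i.
set mu := s / n.
rewrite -subr_ge0 -sumrB.
have -> : \sum_(i < m | P i) ((y i - c) ^+ 2 - (y i - mu) ^+ 2)
   = \sum_(i < m | P i) ((mu - c) * (2%:R * y i) - (mu - c) * (mu + c)).
  by apply: eq_bigr => i _; ring.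
rewrite sumrB -!mulr_sumr.
have -> : \sum_(i < m | P i) (mu + c) = (mu + c) * n.
  by rewrite /n mulr_sumr; apply: eq_bigr => i _; rewrite mulr1.
have hs : s = n * mu by rewrite /mu /s /n -mean_eq.
rewrite -/s -/n hs.
have n0 : 0 <= n by apply: sumr_ge0.
have -> : (mu - c) * (2%:R * (n * mu)) - (mu - c) * ((mu + c) * n) = n * (mu - c) ^+ 2 by ring.
by apply: mulr_ge0 => //; apply: sqr_ge0.
Qed.

End H.

Theorem lemma2 (R : realFieldType) (N m : nat) (M : R)
  (x : 'I_m -> nat) (y : 'I_m -> R)
  (hx : forall i, (1 <= x i <= N)%N)
  (hy : forall i, 0 <= y i <= M)
  (j j' : nat) (hj : (1 <= j <= N)%N) (hj' : (j' <= N)%N) (hjj' : (j < j')%N) :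
  let b : R := \sum_(i < m | (j < x i <= j')%N) 1 in
  L x y j' <= L x y j + 5%:R * b * M ^+ 2 / (4%:R * m%:R).
Proof.
rewrite /L /mu /gamma /=.
set b := \sum_(i < m | (j < x i <= j')%N) (1:R).
set muj := (\sum_(i < m | (x i <= j)%N) y i) / (\sum_(i < m | (x i <= j)%N) 1).
set gj := (\sum_(i < m | (j < x i)%N) y i) / (\sum_(i < m | (j < x i)%N) 1).
have S1 : \sum_(i < m | (x i <= j')%N) (y i - (\sum_(i < m | (x i <= j')%N) y i) / (\sum_(i < m | (x i <= j')%N) 1)) ^+ 2
  <= \sum_(i < m | (x i <= j)%N) (y i - muj) ^+ 2 + b * M ^+ 2.
  apply: le_trans (@sse_min _ _ _ _ hy (fun i => (x i <= j')%N) muj) _.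
  rewrite (bigID (fun i => (x i <= j)%N)) /=.
  apply: lerD.
    rewrite le_eqVlt; apply/orP; left; apply/eqP; apply: eq_bigl => i.
    case: (leqP (x i) j) => h; rewrite ?andbT ?andbF //.
    by rewrite (leq_trans h (ltnW hjj')).
  rewrite /b mulr_suml.
  rewrite (eq_bigl (fun i => (j < x i <= j')%N)); last by move=> i; rewrite /= -ltnNge andbC.
  apply: ler_sum => i _; rewrite mul1r.
  have /andP[y0 yM] := hy i.
  have M0 : 0 <= M := le_trans y0 yM.
  have /andP[m0 mM] := @mean_bound _ _ _ _ hy (fun i => (x i <= j)%N) M0.
  rewrite -/muj in m0 mM.
  nra.
have S2 : \sum_(i < m | (j' < x i)%N) (y i - (\sum_(i < m | (j' < x i)%N) y i) / (\sum_(i < m | (j' < x i)%N) 1)) ^+ 2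
  <= \sum_(i < m | (j < x i)%N) (y i - gj) ^+ 2.
  apply: le_trans (@sse_min _ _ _ _ hy (fun i => (j' < x i)%N) gj) _.
  rewrite [X in _ <= X](bigID (fun i => (j' < x i)%N)) /=.
  rewrite -[X in X <= _]addr0; apply: lerD.
    rewrite le_eqVlt; apply/orP; left; apply/eqP; apply: eq_bigl => i.
    case: (ltnP j' (x i)) => h; rewrite ?andbT ?andbF //.
    by rewrite (ltn_trans hjj' h).
  by apply: sumr_ge0 => i _; apply: sqr_ge0.
have t0 : 0 <= m%:R^-1 :> R by rewrite invr_ge0.
apply: le_trans (ler_wpM2l t0 (lerD S1 S2)) _.
have b0 : 0 <= b by apply: sumr_ge0.
have hb : 0 <= m%:R^-1 * (b * M ^+ 2) by apply: mulr_ge0 => //; apply: mulr_ge0 => //; apply: sqr_ge0.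
rewrite invfM.
move: hb t0; set u := m%:R^-1; set a := \sum_(i < m | (x i <= j)%N) (y i - muj) ^+ 2.
set c := \sum_(i < m | (j < x i)%N) (y i - gj) ^+ 2.
move=> hb t0.
have -> : 5%:R * b * M ^+ 2 * (4%:R^-1 * u) = 5%:R / 4%:R * (u * (b * M ^+ 2)) by ring.
have -> : u * (a + b * M ^+ 2 + c) = u * (a + c) + u * (b * M ^+ 2) by ring.
lra.
Qed.
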